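(* Let $f$ be an injective coloring of a graph $G$. If a walk $W=\langle w_1,\dots,w_{|W|}\rangle$ in $G$ corresponds to a swapping sequence from $f$ to $f$ itself, then $|V(W)|\le (|W|+1)/2$, where $V(W)$ is the set of distinct vertices appearing in $W$ and $|W|$ is the number of entries of the walk.
   Context: A walk $\langle w_1,\dots,w_p\rangle$ corresponds to a swapping sequence $\langle f_1,\dots,f_p\rangle$ from $f=f_1$ to $f_p$ if for $2\le i\le p$, $f_i$ is obtained from $f_{i-1}$ by swapping the colors of $w_{i-1}$ and $w_i$, i.e. $f_i(w_i)=f_{i-1}(w_{i-1})$, $f_i(w_{i-1})=f_{i-1}(w_i)$, and $f_i(v)=f_{i-1}(v)$ for other $v$. *)

(* Defs.v *)
From mathcomp Require Import all_boot.
Set Implicit Arguments. Unset Strict Implicit. Unset Printing Implicit Defensive.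

(* A (finite simple) graph on the finType T is a symmetric irreflexive
   relation e : rel T.  A coloring is any map f : T -> C. *)

Definition is_walk (T : finType) (e : rel T) (w : seq T) : bool := sorted e w.

Definition swap_colors (T : finType) (C : Type) (g : T -> C) (u v : T) : T -> C :=
  fun x => if x == u then g v else if x == v then g u else g x.

(* One step of the swapping sequence: from (f_{i-1}, w_{i-1}) and w_i
   produce (f_i, w_i). *)
Definition swap_step (T : finType) (C : Type) (st : (T -> C) * T) (y : T)
  : (T -> C) * T := (swap_colors st.1 st.2 y, y).

Definition swap_seq_end (T : finType) (C : Type) (f : T -> C) (w : seq T)
  : T -> C :=
  match w with
  | [::] => f
  | x :: s => (foldl (@swap_step T C) (f, x) s).1
  end.

(* Main.v *)
Require Import Defs.
From mathcomp Require Import all_boot.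
From mathcomp Require Import fingroup perm zify.

Section Aux.
Variables (T : finType) (e : rel T) (C : Type) (f : T -> C).

Fixpoint pend (s0 : {perm T}) (cur : T) (s : seq T) : {perm T} :=
  match s with [::] => s0 | y :: s' => pend (tperm cur y * s0)%g y s' end.

Lemma col_end (g : T -> C) (s0 : {perm T}) cur s :
  (forall v, g v = f (s0 v)) ->
  forall v, (foldl (@swap_step T C) (g, cur) s).1 v = f (pend s0 cur s v).
Proof.
elim: s g s0 cur => [|y s IH] g s0 cur Hg v //=.
apply: IH => u; rewrite /swap_colors /= permM Hg.
by case: (tpermP cur y u) => [->|->|/eqP/negbTE-> /eqP/negbTE->]; rewrite ?eqxx //;
  case: eqP => // ->.
Qed.

Lemma fix_porbit (s0 : {perm T}) x y : s0 y = y -> x \in porbit s0 y -> x = y.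
Proof.
move=> Hy /porbitP [i ->]; rewrite permX.
by elim: i => //= i ->.
Qed.

Lemma key (s0 : {perm T}) cur s (P : {set T}) :
  irreflexive e -> cur \in P -> path e cur s ->
  (forall v, v \notin P -> s0 v = v) ->
  #|porbits (pend s0 cur s)| + 2 * #|P :|: [set v in s]|
    <= #|porbits s0| + 2 * #|P| + size s.
Proof.
move=> irr.
elim: s s0 cur P => [|y s IH] s0 cur P HP /= Hp Hfix.
  by rewrite addn0 leq_add2l; apply: leq_mul => //; apply: subset_leq_card;
     apply/subsetP => v; rewrite !inE orbF.
case/andP: Hp => Hcy Hp.
have Hne : cur != y by apply/eqP => E; move: Hcy; rewrite E irr.
have Hpo : #|porbits (tperm cur y * s0)%g| + (cur \notin porbit s0 y).*2 = #|porbits s0| + (cur != y) := porbits_mul_tperm s0 cur y.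
have E : P :|: [set v in y :: s] = (y |: P) :|: [set v in s].
  by apply/setP => v; rewrite !inE orbA [(v == y) || _]orbC.
rewrite E.
have := IH (tperm cur y * s0)%g y (y |: P) (setU11 _ _) Hp.
have Hfix' : forall v, v \notin y |: P -> (tperm cur y * s0)%g v = v.
  move=> v; rewrite !inE negb_or => /andP [/negbTE Hvy HvP].
  rewrite permM tpermD ?Hfix //; last by rewrite eq_sym Hvy.
  by apply/negP => /eqP Ev; move: HvP; rewrite -Ev HP.
move=> /(_ Hfix') H; apply: (leq_trans H) => {H}.
rewrite /= Hne /= in Hpo.
case: (boolP (y \in P)) => HyP.
  have -> : y |: P = P by apply/setP => v; rewrite !inE; case: eqP => // ->.
  move: Hpo; case: (cur \notin porbit s0 y) => /= Hpo; lia.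
have Hyy : s0 y = y by apply: Hfix.
have Hc : cur \notin porbit s0 y.
  by apply/negP => /(fix_porbit _ _ _ Hyy) Ec; move: Hne; rewrite Ec eqxx.
rewrite Hc /= -mul2n /= in Hpo.
rewrite cardsU1 HyP; change (nat_of_bool true) with 1.
have Hpo2 : #|porbits (tperm cur y * s0)%g| + 2 = #|porbits s0| + 1 := Hpo.
have Hg : forall a b c d, a + 2 = b + 1 -> a + 2 * (1 + c) + d <= b + 2 * c + d.+1.
  by move=> a b c d; lia.
exact (Hg _ _ _ _ Hpo2).
Qed.
End Aux.

Theorem lemma7 (T : finType) (e : rel T) (C : Type) (f : T -> C) (w : seq T) :
  symmetric e -> irreflexive e ->
  injective f ->
  is_walk e w ->
  (forall v, swap_seq_end f w v = f v) ->
  2 * #|[set v in w]| <= size w + 1.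
Proof.
move=> _ irr finj.
case: w => [|x s].
  move=> _ _; rewrite add0n leq_eqVlt ltnS leqn0 muln_eq0 /= cards_eq0 orbC.
  by apply/orP; left; apply/eqP/setP => v; rewrite !inE.
rewrite /is_walk /= => Hp Hend.
have Hc := @col_end T C f f 1%g x s (fun v => congr1 f (esym (perm1 v))).
have H1 : pend T 1%g x s = 1%g.
  by apply/permP => v; rewrite perm1; apply: finj; rewrite -Hc; exact: Hend.
have := @key T e 1%g x s [set x] irr (set11 x) Hp.
rewrite H1 cards1 => /(_ (fun v _ => perm1 v)).
have -> : [set x] :|: [set v in s] = [set v in x :: s].
  by apply/setP => v; rewrite !inE.
move=> H /=; rewrite -addnA leq_add2l in H; apply: (leq_trans H); lia.
Qed.
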